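(* Let $n\ge 2$, $1\le p<\infty$, $q=1/p$. Let $\lambda=(\lambda_{ij})$ be an $n\times n$ matrix with nonnegative entries and all row sums equal to $1$, such that $\mathrm{per}(\lambda^q)>0$. Define the $n\times n$ matrix $\bar\lambda$ by $$\bar\lambda_{ij} = \frac{\lambda_{ij}^q\,\mathrm{per}\left(\lambda^q[i,j]\right)}{\mathrm{per}(\lambda^q)}.$$ Then $\mathrm{per}(\bar\lambda^q) \ge \mathrm{per}(\lambda^q)$.
   Context: For a matrix $M$ with nonnegative entries, $M^q$ denotes the matrix obtained by raising each entry to the $q$-th power (with $0^q=0$). For an $n\times n$ matrix $M$, $M[i,j]$ denotes the $(n-1)\times(n-1)$ matrix obtained by deleting row $i$ and column $j$, and $\lambda^q[i,j]$ denotes $(\lambda[i,j])^q$. $\mathrm{per}$ is the permanent. *)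

(* Defs.v *)
From HB Require Import structures.
From mathcomp Require Import all_boot all_order all_algebra all_fingroup.
From mathcomp Require Import all_classical all_reals all_analysis.
Set Implicit Arguments. Unset Strict Implicit. Unset Printing Implicit Defensive.
Import Order.TTheory GRing.Theory Num.Theory.
Local Open Scope ring_scope.

Definition per (R : comRingType) (n : nat) (A : 'M[R]_n) : R :=
  \sum_(s : 'S_n) \prod_(i < n) A i (s i).

(* Entrywise power M^q, using powR (note 0 `^ q = 0 for q <> 0). *)
Definition epow (R : realType) (m n : nat) (q : R) (A : 'M[R]_(m, n)) : 'M[R]_(m, n) :=
  map_mx (fun x => x `^ q) A.

Definition minor (R : Type) (n : nat) (i j : 'I_n.+1) (A : 'M[R]_n.+1) : 'M[R]_n :=
  row' i (col' j A).

Definition lambda_bar (R : realType) (n : nat) (q : R) (L : 'M[R]_n.+1) : 'M[R]_n.+1 :=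
  \matrix_(i, j) ((L i j) `^ q * per (minor i j (epow q L)) / per (epow q L)).

(* Main.v *)
Require Import Defs.
From HB Require Import structures.
From mathcomp Require Import all_boot all_order all_algebra all_fingroup.
From mathcomp Require Import all_classical all_reals all_analysis.
Import Order.TTheory GRing.Theory Num.Theory.
Local Open Scope ring_scope.
From mathcomp Require Import lra.

Lemma per_laplace (R : comRingType) n (A : 'M[R]_n.+1) (i0 j0 : 'I_n.+1) :
  \sum_(s : 'S_n.+1 | s i0 == j0) \prod_k A k (s k) = A i0 j0 * per (minor i0 j0 A).
Proof.
rewrite (reindex (lift_perm i0 j0)); last first.
  pose ulsf i (s : 'S_n.+1) k := odflt k (unlift (s i) (s (lift i k))).
  have ulsfK i (s : 'S_n.+1) k: lift (s i) (ulsf i s k) = s (lift i k).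
    rewrite /ulsf; have:= neq_lift i k.
    by rewrite -(can_eq (permK s)) => /unlift_some[] ? ? ->.
  have inj_ulsf: injective (ulsf i0 _).
    move=> s; apply: can_inj (ulsf (s i0) s^-1%g) _ => k'.
    by rewrite {1}/ulsf ulsfK !permK liftK.
  exists (fun s => perm (inj_ulsf s)) => [s _ | s].
    by apply/permP=> k'; rewrite permE /ulsf lift_perm_lift lift_perm_id liftK.
  move/(s _ =P _) => si0; apply/permP=> k.
  case: (unliftP i0 k) => [k'|] ->; rewrite ?lift_perm_id //.
  by rewrite lift_perm_lift -si0 permE ulsfK.
rewrite /per big_distrr /=.
apply: eq_big => [s | s _]; first by rewrite lift_perm_id eqxx.
rewrite (bigD1_ord i0) //= lift_perm_id; congr (_ * _).
by apply: eq_bigr => k _; rewrite /minor !mxE lift_perm_lift.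
Qed.
Lemma ln_prod (R : realType) (I : finType) (F : I -> R) :
  (forall i, 0 < F i) -> ln (\prod_i F i) = \sum_i ln (F i).
Proof.
move=> H; pose K (x y : R) := 0 < x /\ ln x = y.
have : K (\prod_i F i) (\sum_i ln (F i)).
  apply: (big_rec2 K); first by split; [exact: ltr01 | exact: ln1].
  move=> i y1 y2 _ [h1 h2]; split; first by rewrite mulr_gt0.
  by rewrite lnM ?h2 // posrE.
by case.
Qed.

Lemma ln_ineq (R : realType) (a b : R) : 0 < a -> 0 < b -> a + a * (ln b - ln a) <= b.
Proof.
move=> a0 b0.
have h : ln b - ln a <= b / a - 1.
  rewrite -ln_div ?posrE //.
  rewrite -{1}(subrK 1 (b / a)) addrC.
  apply: le_ln1Dx; rewrite ltrBrDl subrr divr_gt0 //.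
have : a * (ln b - ln a) <= a * (b / a - 1) by rewrite ler_wpM2l // ltW.
have -> : a * (b / a - 1) = b - a.
  by rewrite mulrBr mulr1 mulrCA divff ?gt_eqF // mulr1.
by rewrite -lerBrDl.
Qed.
Theorem lemma2p3 (R : realType) (n : nat) (p : R) (L : 'M[R]_n.+1) :
  (1 <= n)%N -> 1 <= p ->
  (forall i j, 0 <= L i j) ->
  (forall i, \sum_(j < n.+1) L i j = 1) ->
  0 < per (epow p^-1 L) ->
  per (epow p^-1 L) <= per (epow p^-1 (lambda_bar p^-1 L)).
Proof.
move=> _ p1 L0 Lrow.
set q := p^-1.
have q0 : 0 < q by rewrite invr_gt0 (lt_le_trans ltr01).
set A := epow q L.
set P := per A => P0.
have AE i j : A i j = L i j `^ q by rewrite mxE.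
have A0 i j : 0 <= A i j by rewrite AE powR_ge0.
set B := fun i j => per (minor i j A).
set lb := lambda_bar q L.
have lbE i j : lb i j = A i j * B i j / P by rewrite mxE AE.
pose a (s : 'S_n.+1) := \prod_k A k (s k).
have a0 s : 0 <= a s by apply: prodr_ge0.
have lap i j : \sum_(s : 'S_n.+1 | s i == j) a s = A i j * B i j by apply: per_laplace.
have part i (F : 'S_n.+1 -> R) : \sum_s F s = \sum_j \sum_(s : 'S_n.+1 | s i == j) F s.
  by rewrite (partition_big (fun s : 'S_n.+1 => s i) predT) //=.
have B0 i j : 0 <= B i j.
  by rewrite /B /per; apply: sumr_ge0 => s _; apply: prodr_ge0 => k _; rewrite !mxE powR_ge0.
have lb0 i j : 0 <= lb i j by rewrite lbE divr_ge0 ?mulr_ge0 // ltW.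
have lbrow i : \sum_j lb i j = 1.
  under eq_bigr do rewrite lbE.
  rewrite -mulr_suml; under eq_bigr do rewrite -lap.
  by rewrite -part divff // gt_eqF.
have lbpos s k : 0 < a s -> 0 < lb k (s k).
  move=> as0; rewrite lbE divr_gt0 // -lap (bigD1 s) //=.
  by rewrite ltr_pwDl // sumr_ge0.
have Lpos i j : 0 < A i j -> 0 < L i j.
  move=> h; rewrite lt_def L0 andbT; apply/negP => /eqP e.
  by move: h; rewrite AE e powR0 ?ltxx // gt_eqF.
pose g k j := ln (lb k j) - ln (L k j).
have key s : a s + a s * (q * \sum_k g k (s k)) <= \prod_k (lb k (s k)) `^ q.
  have [e|as0] := eqVneq (a s) 0.
    by rewrite e mul0r addr0 prodr_ge0 // => k _; rewrite powR_ge0.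
  have {as0} as0 : 0 < a s by rewrite lt_def as0 a0.
  have Ak k : 0 < A k (s k).
    rewrite lt_def A0 andbT; move: as0; rewrite lt_def => /andP[+ _].
    by rewrite /a prodf_seq_neq0 => /allP /(_ k (mem_index_enum _)).
  have lnb : ln (\prod_k (lb k (s k)) `^ q) = \sum_k q * ln (lb k (s k)).
    rewrite ln_prod; last by move=> k; apply: powR_gt0; apply: lbpos.
    by apply: eq_bigr => k _; rewrite ln_powR.
  have lna : ln (a s) = \sum_k q * ln (L k (s k)).
    by rewrite /a ln_prod //; apply: eq_bigr => k _; rewrite AE ln_powR.
  have -> : q * \sum_k g k (s k) = ln (\prod_k (lb k (s k)) `^ q) - ln (a s).
    by rewrite lnb lna -sumrB mulr_sumr; apply: eq_bigr => k _; rewrite mulrBr.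
  apply: ln_ineq => //; apply: prodr_gt0 => k _; apply: powR_gt0; exact: lbpos.
have gibbs k : 0 <= \sum_j lb k j * g k j.
  apply: (@le_trans _ _ (\sum_j (lb k j - L k j))).
    by rewrite sumrB lbrow Lrow subrr.
  apply: ler_sum => j _.
  have [e|lbp] := eqVneq (lb k j) 0.
    by rewrite e mul0r sub0r oppr_le0.
  have {lbp} lbp : 0 < lb k j by rewrite lt_def lbp lb0.
  have Lp : 0 < L k j.
    apply: Lpos; rewrite lt_def A0 andbT; apply/negP => /eqP e.
    by move: lbp; rewrite lbE e !mul0r ltxx.
  have := @ln_ineq R _ _ lbp Lp; rewrite /g -(opprB (ln (lb k j))) mulrN.
  set X := lb k j * _; move=> h; lra.
have E : per (epow q lb) = \sum_(s : 'S_n.+1) \prod_k lb k (s k) `^ q.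
  by rewrite /per; apply: eq_bigr => s _; apply: eq_bigr => k _; rewrite mxE.
rewrite E; apply: le_trans (ler_sum _ (fun s _ => key s)).
rewrite big_split /= -[\sum_s a s]/P lerDl.
have S : \sum_(s : 'S_n.+1) a s * \sum_k g k (s k) = \sum_k (P * \sum_j lb k j * g k j).
  under eq_bigr do rewrite mulr_sumr.
  rewrite exchange_big /=; apply: eq_bigr => k _.
  rewrite (part k) mulr_sumr; apply: eq_bigr => j _.
  transitivity (\sum_(s : 'S_n.+1 | s k == j) a s * g k j).
    by apply: eq_bigr => s /eqP ->.
  by rewrite -mulr_suml lap lbE mulrA [P * _]mulrC divfK ?gt_eqF.
under eq_bigr do rewrite mulrCA.
rewrite -mulr_sumr S; apply: mulr_ge0; first exact: ltW.
by apply: sumr_ge0 => k _; apply: mulr_ge0; [exact: ltW | exact: gibbs].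
Qed.
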